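(* Let $\beta,p,n$ be positive integers and $\mathcal{S}=\mathcal{S}_n(\beta,p)$. If $G_1,\ldots,G_M$ are pairwise disjoint $\mathcal{S}$-good subsets of $V_n$, then there exists a $(1,\beta,p)$-constrained code on $n$ cells of size $M$. In particular, if $G$ is an $\mathcal{S}$-good $(n,k)$ binary linear code, then there exists a $(1,\beta,p)$-constrained code with rate $\frac{n-k}{n}$.
   Context: $V_n=\{0,1\}^n$ with componentwise addition mod 2. A binary vector is $(\beta,p)$-window-weight-limited if every $\beta$ consecutive entries contain at most $p$ ones; $\mathcal{S}_n(\beta,p)$ is the set of such vectors of length $n$. For $B_1,B_2\subseteq V_n$, $B_1+B_2=\{\mathbf{b}_1+\mathbf{b}_2:\mathbf{b}_1\in B_1,\mathbf{b}_2\in B_2\}$. A subset $B\subseteq V_n$ is $\mathcal{S}$-good if $\mathcal{S}+B=V_n$. An $(n,k)$ linear code is a $k$-dimensional subspace of $V_n$. A code on $n$ binary cells consists, for each write $i\ge1$, of an encoder $\mathcal{E}_i:\{1,\ldots,M_i\}\times\{0,1\}^n\to\{0,1\}^n$ and decoder $\mathcal{D}_i:\{0,1\}^n\to\{1,\ldots,M_i\}$ with $\mathcal{D}_i(\mathcal{E}_i(m,\mathbf{u}))=m$ (the decoder sees only the new state); it has size $M$ if $M_i=M$ for all $i$, in which case its rate is $\frac{\log_2M}{n}$. Starting from the zero state, messages produce states $\mathbf{v}_i=\mathcal{E}_i(m_i,\mathbf{v}_{i-1})$; the code is $(1,\beta,p)$-constrained if for every message sequence and every $i\ge0$, $\mathbf{v}_i+\mathbf{v}_{i+1}$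 has at most $p$ ones in every $\beta$ consecutive positions. *)

(* Defs.v *)
From HB Require Import structures.
From mathcomp Require Import all_boot all_order all_algebra.
From Stdlib Require Rdefinitions Raxioms Rpower.
Set Implicit Arguments. Unset Strict Implicit. Unset Printing Implicit Defensive.
Import GRing.Theory.
Local Open Scope ring_scope.

Definition Vn (n : nat) := 'rV['F_2]_n.

Definition wwl (n beta p : nat) (x : Vn n) : bool :=
  [forall s : 'I_n.+1, ((val s + beta <= n)%N) ==>
     (#|[set j : 'I_n | (val s <= val j < val s + beta)%N && (x ord0 j == 1%R)]| <= p)%N].

Definition Sset (n beta p : nat) : {set Vn n} := [set x | wwl beta p x].

Definition sumset (n : nat) (B1 B2 : {set Vn n}) : {set Vn n} :=
  [set b1 + b2 | b1 in B1, b2 in B2].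

Definition good (n : nat) (S B : {set Vn n}) : Prop := sumset S B = [set: Vn n].

(* A code of size M on n binary cells: for each write i >= 1 an encoder
   E_i : messages x states -> states and a decoder D_i : states -> messages
   with D_i (E_i m u) = m.  Messages {1..M} are represented by 'I_M.
   The values at index i = 0 are irrelevant. *)
Record code (n M : nat) := Code {
  enc : nat -> 'I_M -> Vn n -> Vn n;
  dec : nat -> Vn n -> 'I_M;
  dec_enc : forall i m u, (1 <= i)%N -> dec i (enc i m u) = m }.

(* States v_0 = 0, v_i = E_i(m_i, v_{i-1}) for a message sequence ms
   (ms i = m_i for i >= 1; ms 0 unused). *)
Fixpoint state (n M : nat) (C : code n M) (ms : nat -> 'I_M) (i : nat) : Vn n :=
  match i with
  | 0 => 0
  | i'.+1 => enc C i'.+1 (ms i'.+1) (state C ms i')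
  end.

Definition constrained (n M beta p : nat) (C : code n M) : Prop :=
  forall (ms : nat -> 'I_M) (i : nat),
    state C ms i + state C ms i.+1 \in Sset n beta p.

Definition code_rate (n M : nat) : Rdefinitions.R :=
  Rdefinitions.Rdiv
    (Rdefinitions.Rdiv (Rpower.ln (Raxioms.INR M)) (Rpower.ln (Raxioms.INR 2)))
    (Raxioms.INR n).

(* Main.v *)
Require Import Defs.
From HB Require Import structures.
From mathcomp Require Import all_boot all_order all_algebra.
From Stdlib Require Rdefinitions Raxioms Rpower.
From mathcomp Require Import finfield.
From Stdlib Require Reals Lra.
Set Implicit Arguments. Unset Strict Implicit. Unset Printing Implicit Defensive.
Import GRing.Theory.
Local Open Scope ring_scope.

Module RH.
Import Stdlib.Reals.Reals Stdlib.micromega.Lra.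
Lemma INR_expn (m : nat) : INR (expn 2 m) = (2 ^ m)%R.
Proof. elim: m => [|m IH]; first by rewrite /= ; lra.
rewrite expnS mult_INR IH /=. lra. Qed.
Lemma rate_aux (n m : nat) : is_true (leq 1 n) -> Rdiv (Rdiv (ln (INR (expn 2 m))) (ln (INR 2))) (INR n) = Rdiv (INR m) (INR n).
Proof.
move=> hn.
have hn' : INR n <> 0%R by apply: not_0_INR; move: hn; case: n.
rewrite INR_expn ln_pow; last lra.
have h : (0 < ln (INR 2))%R by rewrite -ln_1; apply: ln_increasing; simpl; lra.
have -> : INR 2 = 2%R by simpl; lra.
simpl in h.
have e : (1 + 1 = 2)%R by lra. rewrite e in h. rewrite /Rdiv; field; split; lra. Qed.
End RH.

Lemma add_self n (x : Vn n) : x + x = 0.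
Proof. apply/rowP => i; rewrite !mxE; case: (x ord0 i) => [[|[|]]] // ? ; exact: val_inj. Qed.

Section P1.
Variables (n beta p M : nat) (G : 'I_M -> {set Vn n}) (hM : (0 < M)%N).
Hypothesis disj : forall i j : 'I_M, i != j -> [disjoint G i & G j].
Hypothesis gd : forall i : 'I_M, good (Sset n beta p) (G i).

Definition enc0 (i : nat) (m : 'I_M) (u : Vn n) : Vn n :=
  odflt u [pick g in G m | u + g \in Sset n beta p].
Definition dec0 (i : nat) (v : Vn n) : 'I_M :=
  odflt (Ordinal hM) [pick m | v \in G m].

Lemma encP i m u : enc0 i m u \in G m /\ u + enc0 i m u \in Sset n beta p.
Proof.
rewrite /enc0; case: pickP => [g /andP[]//|H].
have : u \in sumset (Sset n beta p) (G m) by rewrite gd in_setT.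
case/imset2P => s g Hs Hg E.
by have := H g; rewrite /= Hg E -addrA (add_self g) addr0 Hs.
Qed.

Lemma dec_enc0 i m u : (1 <= i)%N -> dec0 i (enc0 i m u) = m.
Proof.
move=> _; rewrite /dec0; case: pickP => [m' Hm'|H] /=.
  apply/eqP; apply/negPn/negP => ne.
  by have := (encP i m u).1; rewrite (disjointFr (disj ne) Hm').
by have := H m; rewrite (encP i m u).1.
Qed.

Definition C0 : code n M := Code dec_enc0.

Lemma C0_constrained : constrained beta p C0.
Proof. move=> ms i /=; exact: (encP _ _ _).2. Qed.
End P1.

Theorem lemma5 (beta p n : nat) (hbeta : (0 < beta)%N) (hp : (0 < p)%N)
    (hn : (0 < n)%N) :
  (forall (M : nat) (G : 'I_M -> {set Vn n}),
      (0 < M)%N ->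
      (forall i j : 'I_M, i != j -> [disjoint G i & G j]) ->
      (forall i : 'I_M, good (Sset n beta p) (G i)) ->
      exists C : code n M, constrained beta p C)
  /\
  (forall (k : nat) (G : {vspace Vn n}),
      \dim G = k ->
      good (Sset n beta p) [set v : Vn n | v \in G] ->
      exists (M : nat) (C : code n M),
        constrained beta p C /\
        code_rate n M = Rdefinitions.Rdiv (Raxioms.INR (n - k)) (Raxioms.INR n)).
Proof.
have P1 : forall (M : nat) (G : 'I_M -> {set Vn n}),
      (0 < M)%N ->
      (forall i j : 'I_M, i != j -> [disjoint G i & G j]) ->
      (forall i : 'I_M, good (Sset n beta p) (G i)) ->
      exists C : code n M, constrained beta p C.
  move=> M G hM disj gd; exists (C0 hM disj gd); exact: C0_constrained.
split=> // k G dG gd.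
pose W := (G^C)%VS.
pose WS := [set v : Vn n | v \in W].
have cardW : #|WS| = (2 ^ (n - k))%N.
  rewrite cardsE (card_vspace W) card_Fp // dimv_compl dimvf /dim /= mul1n dG //.
pose F (i : 'I_#|WS|) := [set x : Vn n | x - enum_val i \in G].
have hM : (0 < #|WS|)%N by rewrite cardW expn_gt0.
have [C HC] : exists C : code n #|WS|, constrained beta p C.
  apply: (P1 _ F hM).
    move=> i j ne; apply/pred0P => x /=; apply/negP => /andP[]; rewrite !inE => Hi Hj.
    have : enum_val j - enum_val i \in (G :&: W)%VS.
      rewrite memv_cap; apply/andP; split.
        have -> : enum_val j - enum_val i = (x - enum_val i) - (x - enum_val j).
          by rewrite opprB [RHS]addrC addrA addrNK.
        by rewrite rpredB.
      have := enum_valP i; have := enum_valP j; rewrite !inE => a b.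
      by rewrite rpredB.
    rewrite capv_compl memv0 subr_eq0 => /eqP /enum_val_inj E.
    by move: ne; rewrite E eqxx.
  move=> i; apply/setP => x; rewrite in_setT.
  have : x - enum_val i \in sumset (Sset n beta p) [set v : Vn n | v \in G].
    by rewrite gd in_setT.
  case/imset2P => s g Hs; rewrite inE => Hg E.
  apply/imset2P; exists s (g + enum_val i) => //.
    by rewrite inE addrK.
  by rewrite addrA -E addrNK.
exists #|WS|, C; split => //.
rewrite /code_rate cardW; exact: RH.rate_aux.
Qed.
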